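(* Let $G$ be a prime graph and $v\in V(G)$. (1) $v$ is simplicial if and only if, in every induced subgraph of $G$ isomorphic to $P_4$ that contains $v$, the vertex $v$ has degree one (in that $P_4$). (2) $v$ is antisimplicial if and only if, in every induced subgraph of $G$ isomorphic to $P_4$ that contains $v$, the vertex $v$ has degree two (in that $P_4$).
   Context: All graphs are finite and simple. $P_4$ is the path on four vertices. A vertex $b\notin X$ is mixed on $X$ if it has both a neighbor and a non-neighbor in $X$. A homogeneous set is a set $X\subseteq V(G)$ with $1<|X|<|V(G)|$ such that no vertex outside $X$ is mixed on $X$. $G$ is prime if $|V(G)|\ge4$ and has no homogeneous set. A vertex $v$ is simplicial if $N(v)$ is a clique, antisimplicial if $V(G)\setminus N(v)$ is a stable set. *)

(* Defs.v *)
From mathcomp Require Import all_boot.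
Set Implicit Arguments. Unset Strict Implicit. Unset Printing Implicit Defensive.

Definition simple_graph (T : finType) (e : rel T) : Prop :=
  symmetric e /\ irreflexive e.

Definition mixed (T : finType) (e : rel T) (b : T) (X : {set T}) : bool :=
  [exists x in X, e b x] && [exists y in X, ~~ e b y].

Definition homogeneous (T : finType) (e : rel T) (X : {set T}) : bool :=
  (1 < #|X|) && (#|X| < #|T|) && [forall b in ~: X, ~~ mixed e b X].

Definition prime_graph (T : finType) (e : rel T) : Prop :=
  4 <= #|T| /\ forall X : {set T}, ~~ homogeneous e X.

Definition simplicial (T : finType) (e : rel T) (v : T) : Prop :=
  forall x y, e v x -> e v y -> x != y -> e x y.

Definition antisimplicial (T : finType) (e : rel T) (v : T) : Prop :=
  forall x y, ~~ e v x -> ~~ e v y -> ~~ e x y.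

Definition induces_P4 (T : finType) (e : rel T) (S : {set T}) : Prop :=
  exists a b c d : T,
    [/\ uniq [:: a; b; c; d], S = [set a; b; c; d],
        [&& e a b, e b c & e c d] & [&& ~~ e a c, ~~ e a d & ~~ e b d]].

Definition deg_in (T : finType) (e : rel T) (S : {set T}) (v : T) : nat :=
  #|[set x in S | e v x]|.

(* Main.v *)
Require Import Defs.
From mathcomp Require Import all_boot.
Set Implicit Arguments. Unset Strict Implicit. Unset Printing Implicit Defensive.

Section P4.
Variables (T : finType) (e : rel T).
Hypotheses (sy : symmetric e) (irr : irreflexive e).

Lemma P4_degs a b c d :
  uniq [:: a; b; c; d] -> e a b -> e b c -> e c d ->
  ~~ e a c -> ~~ e a d -> ~~ e b d ->
  [/\ deg_in e [set a; b; c; d] a = 1, deg_in e [set a; b; c; d] b = 2,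
      deg_in e [set a; b; c; d] c = 2 & deg_in e [set a; b; c; d] d = 1].
Proof.
move=> /= U ab bc cd nac nad nbd.
move: U; rewrite /= !inE !negb_or => /and4P [/and3P [nab nac' nad'] /andP [nbc nbd'] ncd _].
have ba : e b a by rewrite sy.
have cb : e c b by rewrite sy.
have dc : e d c by rewrite sy.
have nca : e c a = false by rewrite sy; apply/negbTE.
have nda : e d a = false by rewrite sy; apply/negbTE.
have ndb : e d b = false by rewrite sy; apply/negbTE.
have E : forall u w : T, u != w -> (u == w) = false /\ (w == u) = false.
  by move=> u w H; split; [apply/negbTE | rewrite eq_sym; apply/negbTE].
case: (E _ _ nab) => e1 e2; case: (E _ _ nac') => e3 e4; case: (E _ _ nad') => e5 e6.
case: (E _ _ nbc) => e7 e8; case: (E _ _ nbd') => e9 e10; case: (E _ _ ncd) => e11 e12.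
rewrite /deg_in.
have G : forall (u : T) (W : {set T}), (forall x, (x \in [set a; b; c; d]) && e u x = (x \in W)) ->
   #|[set x in [set a; b; c; d] | e u x]| = #|W|.
  by move=> u W HW; apply: eq_card => x; rewrite !inE -HW !inE.
split.
- rewrite (G a [set b]) ?cards1 // => x; rewrite !inE.
  have [->|xa] := eqVneq x a; first by rewrite irr ?e1 ?e2 ?andbF.
  have [->|xb] := eqVneq x b; first by rewrite ?orbT ab.
  have [->|xc] := eqVneq x c; first by rewrite ?orbT ?e8 (negbTE nac).
  have [->|xd] := eqVneq x d; first by rewrite ?orbT ?e10 (negbTE nad).
  by [].
- rewrite (G b [set a; c]) ?cards2 ?e3 // => x; rewrite !inE.
  have [->|xa] := eqVneq x a; first by rewrite ?orbT ba.
  have [->|xb] := eqVneq x b; first by rewrite irr ?e1 ?e2 ?e7 ?andbF.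
  have [->|xc] := eqVneq x c; first by rewrite ?orbT ?e8 bc.
  have [->|xd] := eqVneq x d; first by rewrite ?orbT ?e6 ?e12 (negbTE nbd).
  by [].
- rewrite (G c [set b; d]) ?cards2 ?e9 // => x; rewrite !inE.
  have [->|xa] := eqVneq x a; first by rewrite ?orbT ?e1 ?e5 nca.
  have [->|xb] := eqVneq x b; first by rewrite ?orbT cb.
  have [->|xc] := eqVneq x c; first by rewrite irr ?e8 ?e11 ?andbF.
  have [->|xd] := eqVneq x d; first by rewrite ?orbT cd.
  by [].
- rewrite (G d [set c]) ?cards1 // => x; rewrite !inE.
  have [->|xa] := eqVneq x a; first by rewrite ?orbT ?e3 nda.
  have [->|xb] := eqVneq x b; first by rewrite ?orbT ?e7 ndb.
  have [->|xc] := eqVneq x c; first by rewrite ?orbT dc.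
  have [->|xd] := eqVneq x d; first by rewrite irr ?e12 ?andbF.
  by [].
Qed.
End P4.
Lemma key (T : finType) (e r : rel T) (A : {set T}) (c : bool) (x y w0 : T) :
  symmetric r -> prime_graph e ->
  x \in A -> y \in A -> x != y -> r x y ->
  (forall z p q, z \notin A -> p \in A -> q \in A -> r p q -> e z p -> e z q) ->
  (forall z p, z \in A -> p \in A -> z != p -> ~~ r z p -> e z p = c) ->
  w0 \notin A -> False.
Proof.
move=> ry [_ pr] xA yA nxy rxy Hout Hin w0A.
pose R := [rel p q | [&& p \in A, q \in A & r p q]].
have Rs : connect_sym R.
  by apply: sym_connect_sym => p q /=; rewrite ry andbCA.
pose C := [set w | connect R x w].
have CA : forall w, w \in C -> w \in A.
  have lastA : forall s p, p \in A -> path R p s -> last p s \in A.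
    by elim=> [|u s IH] p pA //= /andP [/and3P [_ uA _] Ps]; apply: IH uA Ps.
  by move=> w; rewrite inE => /connectP [s Ps ->]; apply: lastA xA Ps.
have xC : x \in C by rewrite inE connect0.
have yC : y \in C by rewrite inE; apply: connect1; rewrite /= xA yA rxy.
apply: (negP (pr C)).
rewrite /homogeneous; apply/andP; split; first (apply/andP; split).
- rewrite (cardD1 x) xC add1n ltnS lt0n; apply/pred0Pn; exists y.
  by rewrite !inE eq_sym nxy /=; move: yC; rewrite inE.
- apply: (@leq_ltn_trans #|[set: T] :\ w0|).
    apply/subset_leq_card/subsetP => w wC; rewrite !inE andbT.
    by apply: contraNneq w0A => <-; apply: CA.
  by rewrite cardsDS ?sub1set ?inE // cards1 cardsT subn1 prednK // lt0n;
     apply/eqP => /card0_eq /(_ x).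
- apply/forallP => b; apply/implyP; rewrite in_setC => bC.
  apply/negP => /andP [/existsP [p /andP [pC ebp]] /existsP [q /andP [qC nebq]]].
  case: (boolP (b \in A)) => bA.
  + have rbp : forall u, u \in C -> ~~ r b u.
      move=> u uC; apply: contra bC => rbu.
      have xu : connect R x u by move: uC; rewrite inE.
      rewrite inE; apply: (connect_trans xu); apply: connect1.
      by rewrite /= bA (CA _ uC) ry.
    move: (Hin b p bA (CA _ pC)) (Hin b q bA (CA _ qC)).
    have bp : b != p by apply: contraNneq bC => ->.
    have bq : b != q by apply: contraNneq bC => ->.
    move=> /(_ bp (rbp _ pC)) Hp /(_ bq (rbp _ qC)) Hq.
    by move: ebp nebq; rewrite Hp Hq => ->.
  + have cpq : connect R p q.
      move: pC qC; rewrite !inE => xp xq.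
      by rewrite (connect_trans _ xq) // Rs.
    move/connectP: cpq => [s Ps qE].
    suff : e b q by rewrite (negbTE nebq).
    rewrite qE; elim: s p ebp Ps {qE pC} => [|u s IH] p ebp //= /andP [/and3P [pA uA rpu] Ps].
    by apply: IH Ps; apply: Hout rpu ebp.
Qed.

Lemma uniq4 (T : eqType) (a b c d : T) :
  a != b -> a != c -> a != d -> b != c -> b != d -> c != d -> uniq [:: a; b; c; d].
Proof. by move=> ab ac ad bc bd cd; rewrite /= !inE !negb_or ab ac ad bc bd cd. Qed.

Theorem lemma3p3 (T : finType) (e : rel T) (v : T) :
  simple_graph e -> prime_graph e ->
  (simplicial e v <->
     (forall S : {set T}, induces_P4 e S -> v \in S -> deg_in e S v = 1))
  /\
  (antisimplicial e v <->
     (forall S : {set T}, induces_P4 e S -> v \in S -> deg_in e S v = 2)).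
Proof.
move=> [sy irr] pr.
have ne : forall u w, e u w -> u != w.
  by move=> u w euw; apply: contraTneq euw => ->; rewrite irr.
split; split.
- move=> Hs S [a [b [c [d [U -> /and3P [ab bc cd] /and3P [nac nad nbd]]]]]].
  have [Da Db Dc Dd] := P4_degs sy irr U ab bc cd nac nad nbd.
  rewrite !inE => /orP [/orP [/orP [/eqP E|/eqP E]|/eqP E]|/eqP E]; rewrite E //.
  + have := Hs a c; rewrite E sy => /(_ ab bc).
    move: U; rewrite /= !inE !negb_or => /and4P [/and3P [_ -> _] _ _ _] /(_ isT) eac.
    by rewrite eac in nac.
  + have := Hs b d; rewrite E sy => /(_ bc cd).
    move: U; rewrite /= !inE !negb_or => /and4P [_ /andP [_ ->] _ _] /(_ isT) ebd.
    by rewrite ebd in nbd.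
- move=> H x y vx vy nxy; case E: (e x y) => //; exfalso.
  apply: (@key T e [rel p q | (p != q) && ~~ e p q] [set w | e v w] true x y v).
  + by move=> p q /=; rewrite eq_sym sy.
  + exact: pr.
  + by rewrite inE.
  + by rewrite inE.
  + exact: nxy.
  + by rewrite /= nxy E.
  + move=> z p q; rewrite !inE => zA pA qA /andP [npq nepq] ezp.
    case: (eqVneq z v) => [-> //|zv].
    case Ezq: (e z q) => //; exfalso.
    have U : uniq [:: q; v; p; z].
      apply: uniq4.
      * by rewrite eq_sym ne.
      * by rewrite eq_sym.
      * by apply: contraNneq nepq => ->; rewrite sy.
      * exact: ne.
      * by rewrite eq_sym.
      * by rewrite eq_sym ne.
    have evq : e q v by rewrite sy.
    have epz : e p z by rewrite sy.
    have nqz : ~~ e q z by rewrite sy Ezq.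
    have nqp : ~~ e q p by rewrite sy.
    have [_ D _ _] := P4_degs sy irr U evq pA epz nqp nqz zA.
    have P : induces_P4 e [set q; v; p; z].
      by exists q, v, p, z; split => //; apply/and3P.
    by move: (H _ P); rewrite D !inE eqxx ?orbT => /(_ isT) /eqP.
  + move=> z p _ _ zp; rewrite /= zp /= negbK; exact: id.
  + by rewrite inE irr.
- move=> Ha S [a [b [c [d [U -> /and3P [ab bc cd] /and3P [nac nad nbd]]]]]].
  have [Da Db Dc Dd] := P4_degs sy irr U ab bc cd nac nad nbd.
  rewrite !inE => /orP [/orP [/orP [/eqP E|/eqP E]|/eqP E]|/eqP E]; rewrite E //.
  + by have := Ha c d; rewrite E => /(_ nac nad); rewrite cd.
  + have := Ha a b; rewrite E sy nad sy nbd => /(_ isT isT).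
    by rewrite ab.
- move=> H x y nvx nvy; apply/negP => exy.
  have xv : x != v by apply: contraNneq nvy => <-.
  have yv : y != v by apply: contraNneq nvx => <-; rewrite sy.
  apply: (@key T e e [set w | (w != v) && ~~ e v w] false x y v).
  + exact: sy.
  + exact: pr.
  + by rewrite inE xv.
  + by rewrite inE yv.
  + exact: ne.
  + exact: exy.
  + move=> z p q; rewrite !inE => zA /andP [pv nvp] /andP [qv nvq] epq ezp.
    case: (eqVneq z v) => [zv|zv]; first by move: nvp; rewrite -zv ezp.
    move: zA; rewrite (negbTE zv) /= negbK => evz.
    case Ezq: (e z q) => //; exfalso.
    have U : uniq [:: v; z; p; q].
      apply: uniq4.
      * by rewrite eq_sym.
      * by rewrite eq_sym.
      * by rewrite eq_sym.
      * exact: ne.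
      * by apply: contraNneq nvq => <-.
      * exact: ne.
    have nzq : ~~ e z q by rewrite Ezq.
    have [D _ _ _] := P4_degs sy irr U evz ezp epq nvp nvq nzq.
    have P : induces_P4 e [set v; z; p; q].
      by exists v, z, p, q; split => //; apply/and3P.
    by move: (H _ P); rewrite D !inE eqxx ?orbT => /(_ isT) /eqP.
  + by move=> z p _ _ _ /negbTE.
  + by rewrite inE eqxx.
Qed.
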